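(* Assume $l=-\infty$, $r=\infty$, and that there exists $y_0\in I$ with $G_{y_0}(a)<\infty$ for all $a>0$. Then for every $y\in I$, $G_y$ is a bijection from $[0,\infty)$ onto $[0,\infty)$.
   Context: Let $-\infty\le l<r\le\infty$, $I=(l,r)$, $\eta\colon\mathbb R\to\mathbb R$ Borel with $\eta\ne0$ on $I$, $1/\eta^2\in L^1_{\mathrm{loc}}(I)$, $\eta=0$ off $I$. For $y\in I$, $x\in\mathbb R$, $q(y,x)=\int_y^x\int_y^u\frac{2}{\eta^2(z)}\,dz\,du\in[0,\infty]$. Let $\mu\ne\delta_0$ be a centered probability measure on $\mathbb R$ with finite first moment. For $y\in I$, $a\ge0$, $G_y(a)=\int_{\mathbb R} q(y,y+ax)\,\mu(dx)\in[0,\infty]$. *)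

(* Defs.v *)
From HB Require Import structures.
From mathcomp Require Import all_boot all_order all_algebra.
From mathcomp Require Import all_classical all_reals all_analysis.
Set Implicit Arguments. Unset Strict Implicit. Unset Printing Implicit Defensive.
Import Order.TTheory GRing.Theory Num.Theory.
Import numFieldNormedType.Exports.
Local Open Scope classical_set_scope.
Local Open Scope ring_scope.
Local Open Scope ereal_scope.

Definition ointegral (R : realType) (a b : R) (f : R -> \bar R) : \bar R :=
  if (a <= b)%R then \int[lebesgue_measure]_(u in `[a, b]) f u
  else - \int[lebesgue_measure]_(u in `[b, a]) f u.

Definition q (R : realType) (eta : R -> R) (y x : R) : \bar R :=
  ointegral y x (fun u => ointegral y u (fun z => (2 / (eta z ^+ 2))%:E)).

Definition G (R : realType) (eta : R -> R)
  (mu : probability (measurableTypeR R) R) (y a : R) : \bar R :=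
  \int[mu]_x q eta y (y + a * x)%R.

(* Main.v *)
Require Import Defs.
From HB Require Import structures.
From mathcomp Require Import all_boot all_order all_algebra.
From mathcomp Require Import all_classical all_reals all_analysis.
From mathcomp Require Import measurable_realfun.
From mathcomp Require Import lra ring.
Import Order.TTheory GRing.Theory Num.Theory.
Import numFieldNormedType.Exports.
Local Open Scope classical_set_scope.
Local Open Scope ring_scope.


Lemma integral_gt0' d (T : measurableType d) (R : realType)
  (m : {measure set T -> \bar R}) (D : set T) (g : T -> \bar R) :
  measurable D -> measurable_fun D g -> (forall x, D x -> (0 < g x)%E) ->
  m D != 0%E -> (0 < \int[m]_(x in D) g x)%E.
Proof.
move=> mD mg g0 mD0.
rewrite lt_neqAle integral_ge0; last by move=> x Dx; exact: ltW (g0 x Dx).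
rewrite andbT; apply/negP => /eqP H.
have H' : (\int[m]_(x in D) `|g x| = 0)%E.
  rewrite [RHS]H; apply: eq_integral => x; rewrite inE => Dx.
  by rewrite gee0_abs // ltW // g0.
have [N [mN N0 sub]] := (ae_eq_integral_abs m mD mg).1 H'.
move/eqP: mD0; apply; apply/eqP; rewrite eq_le measure_ge0 andbT -N0.
apply: le_measure; rewrite ?inE //.
move=> x Dx; apply: sub => /= /(_ Dx) gx0.
by move: (g0 x Dx); rewrite gx0 ltxx.
Qed.


Lemma itv_add (R : realType) (g : R -> \bar R) (a b c : R) :
  a <= b -> b <= c -> measurable_fun `[a, c]%classic g ->
  (\int[lebesgue_measure]_(x in `[a, c]) g x =
   \int[lebesgue_measure]_(x in `[a, b]) g x + \int[lebesgue_measure]_(x in `[b, c]) g x)%E.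
Proof.
move=> ab bc mg.
have -> : `[a, c]%classic = `[a, b[%classic `|` `[b, c]%classic :> set R.
  by apply: itv_bndbnd_setU; rewrite bnd_simp.
rewrite integral_setU //.
- rewrite integral_itv_bndo_bndc //.
  by apply: measurable_funS mg => //; apply: subset_itvl; rewrite bnd_simp.
- rewrite -itv_bndbnd_setU //; rewrite bnd_simp //.
- apply/disj_setPS => x [] /=; rewrite !in_itv /= => /andP[_ xb] /andP[bx _].
  by move: (lt_le_trans xb bx); rewrite ltxx.
Qed.

Definition prim {R : realType} (g : R -> R) (x : R) : R :=
  fine (ointegral 0 x (fun u => (g u)%:E)).

Definition locint {R : realType} (g : R -> R) :=
  forall a b : R, lebesgue_measure.-integrable `[a, b]%classic (fun u => (g u)%:E).

Lemma prim_itv (R : realType) (g : R -> R) : locint g ->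
  forall a b : R, a <= b ->
  (\int[lebesgue_measure]_(u in `[a, b]) (g u)%:E = (prim g b - prim g a)%:E)%E.
Proof.
move=> hg.
pose j (a b : R) := fine (\int[lebesgue_measure]_(u in `[a, b]) (g u)%:E)%E.
have jE a b : (\int[lebesgue_measure]_(u in `[a, b]) (g u)%:E = (j a b)%:E)%E.
  by rewrite /j fineK //; apply: integrable_fin_num => //; exact: hg.
have jadd a b c : a <= b -> b <= c -> j a c = j a b + j b c.
  move=> ab bc; apply: EFin_inj; rewrite EFinD -!jE; apply: itv_add => //.
  by case/integrableP: (hg a c).
have pE x : prim g x = if 0 <= x then j 0 x else - j x 0.
  rewrite /prim /ointegral; case: ifP => _; first by [].
  by rewrite jE.
move=> a b ab; rewrite jE; congr EFin; rewrite !pE.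
case: (leP 0 a) => a0.
  rewrite (le_trans a0 ab) (jadd 0 a b) //; lra.
case: (leP 0 b) => b0.
  rewrite (jadd a 0 b) //; [lra | exact: ltW].
rewrite (jadd a b 0) //; [lra | exact: ltW].
Qed.

Lemma prim_oint (R : realType) (g : R -> R) : locint g ->
  forall a b : R, ointegral a b (fun u => (g u)%:E) = (prim g b - prim g a)%:E.
Proof.
move=> hg a b; rewrite /ointegral; case: ifP => ab.
  exact: prim_itv.
rewrite prim_itv //; last by rewrite ltW // ltNge ab.
by rewrite -EFinN opprB.
Qed.


Lemma leb_itv (R : realType) (a b : R) : a <= b ->
  lebesgue_measure (`[a, b]%classic : set R) = (b - a)%:E.
Proof.
move=> ab; rewrite lebesgue_measure_itv /= lte_fin.
case: ltP => [//|ba]; have -> : b = a by apply/eqP; rewrite eq_le ab ba.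
by rewrite subrr.
Qed.

Lemma intcst (R : realType) (a b c : R) : a <= b ->
  (\int[lebesgue_measure]_(u in `[a, b]) c%:E = (c * (b - a))%:E)%E.
Proof.
move=> ab; rewrite (integral_cst lebesgue_measure (D := `[a, b]%classic)) //.
have L := @leb_itv R a b ab.
transitivity (c%:E * (b - a)%:E)%E; last by [].
congr (_ * _)%E.
exact: L.
Qed.

Lemma locint_nd (R : realType) (g : R -> R) :
  {homo g : x y / x <= y} -> locint g.
Proof.
move=> nd a b; apply/integrableP; split.
  by apply/measurable_EFinP; apply: nondecreasing_measurable.
apply: (@le_lt_trans _ _ (\int[lebesgue_measure]_(u in `[a, b]) (`|g a| + `|g b|)%:E)%E).
  apply: ge0_le_integral => //.
  - apply: measurableT_comp; first exact: abse_measurable.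
    by apply/measurable_EFinP; exact: nondecreasing_measurable.
  - move=> x; rewrite /= in_itv /= => /andP[ax xb]; rewrite lee_fin.
    have h1 := nd _ _ ax; have h2 := nd _ _ xb.
    have h3 := ler_norm (g b); have h4 : - g a <= `|g a| by rewrite -normrN ler_norm.
    have h5 := normr_ge0 (g a); have h6 := normr_ge0 (g b).
    rewrite ler_norml; apply/andP; split; lra.
have [ab|ba] := leP a b.
  by rewrite intcst // ltry.
rewrite set_itv_ge ?integral_set0 ?ltry //.
by rewrite bnd_simp -ltNge.
Qed.


Arguments locint_nd {R g}.
Arguments prim_itv {R g}.
Arguments prim_oint {R g}.
Arguments intcst {R a b}.
Arguments leb_itv {R a b}.

Lemma locint_cst (R : realType) (c : R) : locint (fun _ : R => c).
Proof. by apply: locint_nd. Qed.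

Lemma prim_bnd (R : realType) (g : R -> R) : {homo g : x y / x <= y} ->
  forall a b : R, a <= b ->
  (b - a) * g a <= prim g b - prim g a <= (b - a) * g b.
Proof.
move=> nd a b ab; have hg := locint_nd nd.
have E := prim_itv hg a b ab.
apply/andP; split; rewrite -lee_fin -E.
  rewrite mulrC -intcst //; apply: le_integral => //; first exact: locint_cst.
  by move=> x; rewrite inE /= in_itv /= => /andP[ax _]; rewrite lee_fin nd.
rewrite mulrC -intcst //; apply: le_integral => //; first exact: locint_cst.
by move=> x; rewrite inE /= in_itv /= => /andP[_ xb]; rewrite lee_fin nd.
Qed.

Lemma prim_sub (R : realType) (g : R -> R) (c : R) : {homo g : x y / x <= y} ->
  forall a b : R,
  prim (fun u => g u - c) b - prim (fun u => g u - c) a =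
  prim g b - prim g a - c * (b - a).
Proof.
move=> nd.
have ndc : {homo (fun u => g u - c) : x y / x <= y}.
  by move=> x y xy; rewrite lerD2r nd.
suff H a b : a <= b -> prim (fun u => g u - c) b - prim (fun u => g u - c) a =
  prim g b - prim g a - c * (b - a).
  move=> a b; have [ab|ba] := leP a b; first exact: H.
  have := H b a (ltW ba); lra.
move=> ab; apply: EFin_inj.
rewrite -(prim_itv (locint_nd ndc) a b ab) EFinB -(prim_itv (locint_nd nd) a b ab).
under eq_integral do rewrite EFinB.
rewrite (integralB_EFin (f2 := fun _ => c)) //.
- by rewrite intcst.
- exact: locint_nd.
- exact: locint_cst.
Qed.


Lemma prim_convex (R : realType) (g : R -> R) : {homo g : x y / x <= y} ->
  forall u v t : R, 0 <= t <= 1 ->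
  prim g (t * u + (1 - t) * v) <= t * prim g u + (1 - t) * prim g v.
Proof.
move=> nd.
suff H u v t : u <= v -> 0 <= t <= 1 ->
    prim g (t * u + (1 - t) * v) <= t * prim g u + (1 - t) * prim g v.
  move=> u v t t01; have [uv|vu] := leP u v; first exact: H.
  have t01' : 0 <= 1 - t <= 1 by move/andP: t01 => [? ?]; apply/andP; split; lra.
  have := H v u (1 - t) (ltW vu) t01'.
  have -> : (1 - t) * v + (1 - (1 - t)) * u = t * u + (1 - t) * v by ring.
  nra.
move=> uv /andP[t0 t1].
set w := t * u + (1 - t) * v.
have uw : u <= w by rewrite /w; nra.
have wv : w <= v by rewrite /w; nra.
have /andP[_ h1] := @prim_bnd R g nd _ _ uw.
have /andP[h2 _] := @prim_bnd R g nd _ _ wv.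
have e1 : w - u = (1 - t) * (v - u) by rewrite /w; ring.
have e2 : v - w = t * (v - u) by rewrite /w; ring.
rewrite e1 in h1; rewrite e2 in h2.
have k1 : t * (prim g w - prim g u) <= t * ((1 - t) * (v - u) * g w).
  by apply: ler_wpM2l.
have k2 : (1 - t) * (t * (v - u) * g w) <= (1 - t) * (prim g v - prim g w).
  by apply: ler_wpM2l => //; lra.
have : t * ((1 - t) * (v - u) * g w) = (1 - t) * (t * (v - u) * g w) by ring.
nra.
Qed.

Definition Qf {R : realType} (p : R -> R) (y x : R) : R :=
  prim p x - prim p y - p y * (x - y).

Lemma homo_ltW (R : realType) (p : R -> R) :
  {homo p : x y / x < y} -> {homo p : x y / x <= y}.
Proof.
by move=> hp x y; rewrite le_eqVlt => /orP[/eqP->|/hp/ltW].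
Qed.

Lemma Qf_gt0 (R : realType) (p : R -> R) : {homo p : x y / x < y} ->
  forall y x : R, x != y -> 0 < Qf p y x.
Proof.
move=> hp y x; have nd := @homo_ltW R p hp; rewrite /Qf.
rewrite neq_lt => /orP[xy|yx].
  set m := (x + y) / 2.
  have xm : x <= m by rewrite /m; lra.
  have my : m <= y by rewrite /m; lra.
  have /andP[_ h1] := @prim_bnd R p nd _ _ xm.
  have /andP[_ h2] := @prim_bnd R p nd _ _ my.
  have pm : p m < p y by apply: hp; rewrite /m; lra.
  have k : (m - x) * p m < (m - x) * p y by rewrite ltr_pM2l // /m; lra.
  have e : y - m = m - x by rewrite /m; field.
  rewrite e in h2.
  have : p y * (x - y) = - ((m - x) * p y + (m - x) * p y) by rewrite /m; field.
  lra.
set m := (x + y) / 2.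
have ym : y <= m by rewrite /m; lra.
have mx : m <= x by rewrite /m; lra.
have /andP[h1 _] := @prim_bnd R p nd _ _ ym.
have /andP[h2 _] := @prim_bnd R p nd _ _ mx.
have pm : p y < p m by apply: hp; rewrite /m; lra.
have k : (x - m) * p y < (x - m) * p m by rewrite ltr_pM2l // /m; lra.
have e : m - y = x - m by rewrite /m; field.
rewrite e in h1.
have : p y * (x - y) = (x - m) * p y + (x - m) * p y by rewrite /m; field.
lra.
Qed.

Lemma Qf0 (R : realType) (p : R -> R) (y : R) : Qf p y y = 0.
Proof. by rewrite /Qf !subrr mulr0 subr0. Qed.

Lemma Qf_ge0 (R : realType) (p : R -> R) : {homo p : x y / x < y} ->
  forall y x : R, 0 <= Qf p y x.
Proof.
move=> hp y x; have [->|xy] := eqVneq x y; first by rewrite Qf0.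
exact/ltW/Qf_gt0.
Qed.

Lemma Qf_nd (R : realType) (p : R -> R) : {homo p : x y / x < y} ->
  forall y x1 x2 : R, y <= x1 -> x1 <= x2 -> Qf p y x1 <= Qf p y x2.
Proof.
move=> hp y x1 x2 yx1 x12; have nd := @homo_ltW R p hp; rewrite /Qf.
have /andP[h _] := @prim_bnd R p nd _ _ x12.
have k : (x2 - x1) * p y <= (x2 - x1) * p x1.
  by apply: ler_wpM2l; [lra | exact: nd].
have : p y * (x2 - y) = p y * (x1 - y) + (x2 - x1) * p y by ring.
lra.
Qed.

Lemma Qf_ni (R : realType) (p : R -> R) : {homo p : x y / x < y} ->
  forall y x1 x2 : R, x2 <= y -> x1 <= x2 -> Qf p y x2 <= Qf p y x1.
Proof.
move=> hp y x1 x2 x2y x12; have nd := @homo_ltW R p hp; rewrite /Qf.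
have /andP[_ h] := @prim_bnd R p nd _ _ x12.
have k : (x2 - x1) * p x2 <= (x2 - x1) * p y.
  by apply: ler_wpM2l; [lra | exact: nd].
have : p y * (x2 - y) = p y * (x1 - y) + (x2 - x1) * p y by ring.
lra.
Qed.

Lemma Qf_convex (R : realType) (p : R -> R) : {homo p : x y / x < y} ->
  forall y u v t : R, 0 <= t <= 1 ->
  Qf p y (t * u + (1 - t) * v) <= t * Qf p y u + (1 - t) * Qf p y v.
Proof.
move=> hp y u v t t01; have nd := @homo_ltW R p hp; rewrite /Qf.
have h := @prim_convex R p nd u v t t01.
have : t * (prim p u - prim p y - p y * (u - y)) +
       (1 - t) * (prim p v - prim p y - p y * (v - y)) =
       t * prim p u + (1 - t) * prim p v - prim p y
         - p y * (t * u + (1 - t) * v - y) by ring.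
lra.
Qed.

Lemma Qf_shift (R : realType) (p : R -> R) (y0 y z : R) :
  Qf p y z = Qf p y0 z - Qf p y0 y + (p y0 - p y) * (z - y).
Proof. rewrite /Qf; ring. Qed.


Arguments locint_nd {R g}.
Arguments prim_itv {R g}.
Arguments prim_oint {R g}.

Lemma phi_facts (R : realType) (eta : R -> R) :
  (forall z : R, eta z != 0) ->
  (forall a b : R, lebesgue_measure.-integrable `[a, b]
                     (fun z => ((eta z ^+ 2)^-1)%:E)) ->
  let f := fun z => 2 / (eta z ^+ 2) in
  locint f /\ {homo prim f : x y / x < y}.
Proof.
move=> eta0 hint f.
have hf : locint f.
  move=> a b.
  have h2 : lebesgue_measure.-integrable `[a, b]%classic
      (fun z => (2%:E * ((eta z ^+ 2)^-1)%:E)%E).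
    by apply: integrableZl => //; exact: hint.
  apply: (eq_integrable _ _ _ _ h2) => //.
split => // a b ab.
rewrite -subr_gt0 -lte_fin -(prim_itv hf a b (ltW ab)).
apply: integral_gt0' => //.
- by case/integrableP: (hf a b).
- by move=> x _; rewrite lte_fin /f divr_gt0 // exprn_even_gt0 // eta0.
- apply/negP => /eqP H; have L := @leb_itv R a b (ltW ab).
  have : ((b - a)%:E = 0 :> \bar R)%E by rewrite -L; exact: H.
  by move/eqP; rewrite eqe subr_eq0 gt_eqF.
Qed.

Lemma q_eq (R : realType) (eta : R -> R) :
  (forall z : R, eta z != 0) ->
  (forall a b : R, lebesgue_measure.-integrable `[a, b]
                     (fun z => ((eta z ^+ 2)^-1)%:E)) ->
  forall y x : R, q eta y x = (Qf (prim (fun z => 2 / (eta z ^+ 2))) y x)%:E.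
Proof.
move=> eta0 hint y x.
have [hf hp] := @phi_facts R eta eta0 hint.
set f := (fun z => 2 / (eta z ^+ 2)) in hf hp *.
set p := prim f in hp *.
have nd := @homo_ltW R p hp.
rewrite /q.
have -> : (fun u => ointegral y u (fun z => (2 / eta z ^+ 2)%:E)) =
          (fun u => (p u - p y)%:E).
  by apply: funext => u; rewrite (prim_oint hf).
have ndc : {homo (fun u => p u - p y) : a b / a <= b}.
  by move=> a b ab; rewrite lerD2r nd.
rewrite (prim_oint (locint_nd ndc)) (@prim_sub R p (p y) nd) /Qf.
by [].
Qed.


Arguments Qf_shift {R}. Arguments Qf_ge0 {R p}. Arguments Qf_gt0 {R p}.
Arguments Qf_convex {R p}. Arguments Qf_nd {R p}. Arguments Qf_ni {R p}.
Arguments Qf0 {R}. Arguments homo_ltW {R p}.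

Lemma hmeas (R : realType) (p : R -> R) : {homo p : x y / x < y} ->
  forall y a : R, 0 <= a ->
  measurable_fun (setT : set (measurableTypeR R)) (fun x => (Qf p y (y + a * x))%:E).
Proof.
move=> hp y a a0; apply/measurable_EFinP.
have -> : (fun x => Qf p y (y + a * x)) =
  (fun x => Qf p y (Num.max (y + a * x) y)) \+ (fun x => Qf p y (Num.min (y + a * x) y)).
  apply: funext => x /=; have [h|h] := leP (y + a * x) y.
    by rewrite Qf0 add0r.
  by rewrite Qf0 addr0.
apply: measurable_funD.
  apply: nondecreasing_measurable => // x1 x2 x12.
  apply: (@Qf_nd R p hp); first by rewrite le_max lexx orbT.
  by apply: le_max2 => //; rewrite lerD2l ler_wpM2l.
apply: nonincreasing_measurable => // x1 x2 x12.
apply: (@Qf_ni R p hp); first by rewrite ge_min lexx orbT.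
by apply: le_min2 => //; rewrite lerD2l ler_wpM2l.
Qed.

Arguments hmeas {R p}.

Lemma Gfin (R : realType) (p : R -> R) (hp : {homo p : x y / x < y})
  (mu : probability (measurableTypeR R) R) :
  mu.-integrable setT (fun x => x%:E) ->
  forall y0 : R, (forall a : R, 0 < a -> (\int[mu]_x (Qf p y0 (y0 + a * x))%:E < +oo)%E) ->
  forall y a : R, 0 <= a -> (\int[mu]_x (Qf p y (y + a * x))%:E < +oo)%E.
Proof.
move=> mui y0 G0 y a; rewrite le_eqVlt => /orP[/eqP a0|a0].
  rewrite -a0; under eq_integral do rewrite mul0r addr0 Qf0.
  by rewrite integral0 ltry.
set K := Qf p y0 (y0 + 2 * (y - y0)) / 2.
set L := `|p y0 - p y| * a.
have K0 : 0 <= K by rewrite /K divr_ge0 // (Qf_ge0 hp).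
have L0 : 0 <= L by rewrite /L mulr_ge0 // ltW.
have pt x : Qf p y (y + a * x) <=
    K + L * `|x| + 2^-1 * Qf p y0 (y0 + (2 * a) * x).
  rewrite (Qf_shift p y0).
  have h1 := Qf_ge0 hp y0 y.
  have h2 : (p y0 - p y) * (y + a * x - y) <= L * `|x|.
    rewrite (_ : y + a * x - y = a * x); last by ring.
    have -> : L * `|x| = `|(p y0 - p y) * (a * x)| by rewrite /L !normrM (gtr0_norm a0) mulrA.
    exact: ler_norm.
  have h3 : Qf p y0 (y + a * x) <=
      2^-1 * Qf p y0 (y0 + 2 * (y - y0)) + (1 - 2^-1) * Qf p y0 (y0 + (2 * a) * x).
    have -> : y + a * x = 2^-1 * (y0 + 2 * (y - y0)) + (1 - 2^-1) * (y0 + (2 * a) * x).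
      by field.
    apply: Qf_convex => //; apply/andP; split; [by rewrite invr_ge0 | by rewrite invf_le1 // ler1n].
  have E2 : (1 - 2^-1 : R) = 2^-1 by field.
  rewrite E2 in h3.
  rewrite /K; lra.
have mQ : measurable_fun (setT : set (measurableTypeR R))
    (fun x => (2^-1 * Qf p y0 (y0 + (2 * a) * x))%:E).
  apply/measurable_EFinP; apply: measurable_funM => //.
  by apply/measurable_EFinP; apply: hmeas => //; rewrite mulr_ge0 // ltW.
have mN : measurable_fun (setT : set (measurableTypeR R)) (fun x => (L * `|x|)%:E).
  apply/measurable_EFinP; apply: measurable_funM => //.
apply: (@le_lt_trans _ _
   (\int[mu]_x ((K%:E + (L * `|x|)%:E) + (2^-1 * Qf p y0 (y0 + (2 * a) * x))%:E))%E).
  apply: ge0_le_integral => //.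
  - by move=> x _; rewrite lee_fin (Qf_ge0 hp).
  - exact: hmeas (ltW a0).
  - apply: emeasurable_funD => //; apply: emeasurable_funD => //.
  - by move=> x _; rewrite -!EFinD lee_fin.
rewrite ge0_integralD //; try (by move=> x _; rewrite lee_fin mulr_ge0 // (Qf_ge0 hp));
  try (by apply: emeasurable_funD);
  try (by move=> x _; rewrite -EFinD lee_fin addr_ge0 // mulr_ge0).
rewrite ge0_integralD //; try (by move=> x _; rewrite lee_fin mulr_ge0).
apply: lte_add_pinfty; first apply: lte_add_pinfty.
- rewrite integral_cst //; apply: lte_mul_pinfty => //.
  apply: (le_lt_trans (probability_le1 mu _)) => //; exact: ltry.
- under eq_integral do rewrite EFinM.
  rewrite ge0_integralZl_EFin //.
  + apply: lte_mul_pinfty => //.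
    case/integrableP: mui => _; apply: le_lt_trans; rewrite le_eqVlt; apply/orP; left.
    by apply/eqP; apply: eq_integral => x _.
  + by apply/measurable_EFinP; exact: normr_measurable.
- under eq_integral do rewrite EFinM.
  rewrite ge0_integralZl_EFin //.
  + apply: lte_mul_pinfty => //; apply: G0; by rewrite mulr_gt0.
  + by move=> x _; rewrite lee_fin (Qf_ge0 hp).
  + by apply: (hmeas hp y0 (2 * a)); rewrite mulr_ge0 // ltW.
Qed.


Arguments Qf_shift {R}. Arguments Qf_ge0 {R p}. Arguments Qf_gt0 {R p}.
Arguments Qf_convex {R p}. Arguments Qf_nd {R p}. Arguments Qf_ni {R p}.
Arguments Qf0 {R}. Arguments homo_ltW {R p}. Arguments hmeas {R p}.

Lemma Gconvex (R : realType) (p : R -> R) (hp : {homo p : x y / x < y})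
  (mu : probability (measurableTypeR R) R) (y a b t : R) :
  0 <= a -> 0 <= b -> 0 <= t <= 1 ->
  (\int[mu]_x (Qf p y (y + (t * a + (1 - t) * b) * x))%:E <=
   t%:E * \int[mu]_x (Qf p y (y + a * x))%:E +
   (1 - t)%:E * \int[mu]_x (Qf p y (y + b * x))%:E)%E.
Proof.
move=> a0 b0 /andP[t0 t1].
have t1' : 0 <= 1 - t by lra.
rewrite -ge0_integralZl_EFin //; last 2 first.
  - by move=> x _; rewrite lee_fin (Qf_ge0 hp).
  - exact: (hmeas hp y a).
rewrite -(ge0_integralZl_EFin _ _ _ _ t1') //; last 2 first.
  - by move=> x _; rewrite lee_fin (Qf_ge0 hp).
  - exact: (hmeas hp y b).
rewrite -ge0_integralD //; last 4 first.
  - by move=> x _; rewrite -EFinM lee_fin mulr_ge0 // (Qf_ge0 hp).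
  - by apply: emeasurable_funM => //; exact: (hmeas hp y a).
  - by move=> x _; rewrite -EFinM lee_fin mulr_ge0 // (Qf_ge0 hp).
  - by apply: emeasurable_funM => //; exact: (hmeas hp y b).
apply: ge0_le_integral => //.
- by move=> x _; rewrite lee_fin (Qf_ge0 hp).
- apply: (hmeas hp y); rewrite addr_ge0 // mulr_ge0 //.
- by apply: emeasurable_funD; apply: emeasurable_funM => //; [exact: (hmeas hp y a) | exact: (hmeas hp y b)].
- move=> x _; rewrite -!EFinM -EFinD lee_fin.
  have -> : y + (t * a + (1 - t) * b) * x = t * (y + a * x) + (1 - t) * (y + b * x) by ring.
  by apply: Qf_convex => //; rewrite t0 t1.
Qed.

Lemma muD_neq0 (R : realType) (mu : probability (measurableTypeR R) R) :
  (exists A : set R, measurable A /\ mu A <> \d_(0 : R) A) ->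
  mu (~` [set (0 : R)]) != 0%E.
Proof.
move=> [A [mA nA]]; apply/negP => /eqP mD0; apply: nA.
have mD : measurable (~` [set (0 : R)] : set (measurableTypeR R)).
  by apply: measurableC.
rewrite diracE; case: (boolP (0 \in A)) => A0.
  have h : mu (~` A) = 0%E.
    apply/eqP; rewrite eq_le measure_ge0 andbT -mD0; apply: le_measure; rewrite ?inE //.
    - exact: measurableC.
    - by move=> x /= nAx x0; apply: nAx; rewrite x0 -inE.
  have fA : mu A \is a fin_num.
    by rewrite ge0_fin_numE ?measure_ge0 // (le_lt_trans (probability_le1 mu mA)) ?ltry.
  move: (probability_setC mu mA); rewrite h; move: fA.
  case: (mu A) => //= r _ /eqP; rewrite -EFinB eqe => /eqP r1.
  by congr EFin; lra.
have h : mu A = 0%E.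
  apply/eqP; rewrite eq_le measure_ge0 andbT -mD0; apply: le_measure; rewrite ?inE //.
  by move=> x Ax /= x0; move/negP: A0; apply; rewrite -x0 inE.
by rewrite h.
Qed.

Lemma Gpos (R : realType) (p : R -> R) (hp : {homo p : x y / x < y})
  (mu : probability (measurableTypeR R) R) (y a : R) :
  (exists A : set R, measurable A /\ mu A <> \d_(0 : R) A) -> 0 < a ->
  (0 < \int[mu]_x (Qf p y (y + a * x))%:E)%E.
Proof.
move=> hA a0.
have mD : measurable (~` [set (0 : R)] : set (measurableTypeR R)).
  by apply: measurableC.
set D := (~` [set (0 : R)] : set (measurableTypeR R)).
have H1 : (0 < \int[mu]_(x in D) (Qf p y (y + a * x))%:E)%E.
  apply: integral_gt0' => //.
  - by apply: measurable_funS (hmeas hp y a (ltW a0)).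
  - move=> x /= x0; rewrite lte_fin; apply: Qf_gt0 => //.
    apply/negP => /eqP h; have ax : a * x = 0 by rewrite -(addKr y (a * x)) h addNr.
    by move/eqP: ax; rewrite mulf_eq0 gt_eqF //= => /eqP.
  - exact: muD_neq0.
have H2 : (\int[mu]_(x in D) (Qf p y (y + a * x))%:E <=
           \int[mu]_x (Qf p y (y + a * x))%:E)%E.
  apply: ge0_subset_integral => //.
  - exact: (hmeas hp y a (ltW a0)).
  - by move=> x _; rewrite lee_fin (Qf_ge0 hp).
exact: lt_le_trans H1 H2.
Qed.


Lemma convex_facts (R : realType) (g : R -> R) :
  g 0 = 0 ->
  (forall a, 0 < a -> 0 < g a) ->
  (forall a b t, 0 <= a -> 0 <= b -> 0 <= t <= 1 ->
     g (t * a + (1 - t) * b) <= t * g a + (1 - t) * g b) ->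
  (forall a b, 0 <= a -> a < b -> g a < g b) /\
  (forall v, 0 <= v -> exists a, 0 <= a /\ g a = v).
Proof.
move=> g0 gpos conv.
have gge0 a : 0 <= a -> 0 <= g a.
  by rewrite le_eqVlt => /orP[/eqP<-|/gpos/ltW]; rewrite ?g0.
have mono a b : 0 <= a -> a < b -> g a < g b.
  move=> a0 ab; have b0 : 0 < b by apply: le_lt_trans ab.
  set t := a / b.
  have t0 : 0 <= t by rewrite divr_ge0 // ltW.
  have t1 : t < 1 by rewrite ltr_pdivrMr // mul1r.
  have := conv b 0 t (ltW b0) (lexx 0); rewrite t0 (ltW t1) => /(_ isT).
  rewrite mulr0 addr0 g0 mulr0 addr0 /t mulfVK ?gt_eqF //.
  move=> h; apply: (le_lt_trans h).
  by rewrite gtr_pMl // gpos.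
split => // v; rewrite le_eqVlt => /orP[/eqP<-|v0].
  by exists 0; rewrite lexx g0.
set B := Num.max 1 (v / g 1).
have B1 : 1 <= B by rewrite le_max lexx.
have B0 : 0 <= B by apply: le_trans B1.
have g1 := gpos 1 ltr01.
have gB : v <= g B.
  have h := conv B 0 (B^-1) B0 (lexx 0).
  rewrite invr_ge0 B0 invf_le1 ?(lt_le_trans ltr01) // B1 in h.
  have := h isT; rewrite mulr0 addr0 g0 mulr0 addr0 mulVf ?gt_eqF ?(lt_le_trans ltr01) //.
  move=> h1.
  have : v / g 1 <= B by rewrite le_max lexx orbT.
  rewrite ler_pdivrMr // => h2.
  have : B * g 1 <= B * (B^-1 * g B) by rewrite ler_wpM2l.
  rewrite mulrA mulfV ?gt_eqF ?(lt_le_trans ltr01) // mul1r.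
  lra.
set L := g (B + 1).
have L0 : 0 <= L by apply: gge0; lra.
have lip s u : 0 <= s -> s <= u -> u <= B -> g u - g s <= (u - s) * L.
  move=> s0 su uB; set c := B + 1.
  have cs : 1 <= c - s by rewrite /c; lra.
  have cs0 : 0 < c - s by lra.
  set l := (c - u) / (c - s).
  have l0 : 0 <= l by rewrite divr_ge0 //; rewrite /c; lra.
  have l1 : l <= 1 by rewrite ler_pdivrMr // mul1r; lra.
  have h := conv s c l s0 (ltac:(rewrite /c; lra)).
  rewrite l0 l1 in h; have {h} := h isT.
  have -> : l * s + (1 - l) * c = u.
    by rewrite /l; field; rewrite gt_eqF.
  have -> : 1 - l = (u - s) / (c - s) by rewrite /l; field; rewrite gt_eqF.
  move=> h.
  have gs := gge0 s s0.
  have k1 : (u - s) / (c - s) <= u - s.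
    by rewrite ler_pdivrMr // ler_peMr //; lra.
  have k2 : (u - s) / (c - s) * g c <= (u - s) * g c.
    by apply: ler_wpM2r => //; apply: gge0; rewrite /c; lra.
  have k3 : 0 <= (u - s) / (c - s) by rewrite divr_ge0 //; lra.
  have k4 : (u - s) / (c - s) * g s >= 0 by rewrite mulr_ge0.
  have : l * g s = g s - (u - s) / (c - s) * g s.
    by rewrite /l; field; rewrite gt_eqF.
  rewrite /L -/c; lra.
set cl := fun u : R => if u < 0 then 0 else if B < u then B else u.
have clB u : 0 <= cl u <= B.
  rewrite /cl; case: ltP => u0; first by rewrite lexx.
  by case: ltP => uB; apply/andP; split => //; lra.
have clm u w : u <= w -> cl u <= cl w /\ cl w - cl u <= w - u.
  by move=> uw; rewrite /cl; do 4 (case: ltP => ?); split; lra.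
have gnd u w : 0 <= u -> u <= w -> g u <= g w.
  move=> u0; rewrite le_eqVlt => /orP[/eqP->//|uw].
  exact/ltW/mono.
have hlip u w : `|g (cl u) - g (cl w)| <= L * `|u - w|.
  wlog uw : u w / u <= w.
    move=> H; have [uw|wu] := leP u w; first exact: H.
    by rewrite distrC [X in _ * X]distrC; apply: H; apply: ltW.
  have [c1 c2] := clm u w uw.
  have /andP[cu0 cuB] := clB u; have /andP[cw0 cwB] := clB w.
  have h1 := lip (cl u) (cl w) cu0 c1 cwB.
  have h2 := gnd _ _ cu0 c1.
  rewrite distrC ger0_norm ?subr_ge0 // distrC ger0_norm ?subr_ge0 //.
  have : (cl w - cl u) * L <= (w - u) * L by apply: ler_wpM2r.
  lra.
have hcont : continuous (fun u => g (cl u)).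
  move=> x; apply/cvgrPdist_lt => e e0; near=> z.
  apply: (le_lt_trans (hlip x z)).
  near: z; exists (e / (L + 1)); first by rewrite /= divr_gt0 //; lra.
  move=> z /= xz.
  have L1 : 0 < L + 1 by lra.
  have : L * `|x - z| <= L * (e / (L + 1)) by apply: ler_wpM2l => //; apply: ltW.
  have : L * (e / (L + 1)) < e.
    by rewrite mulrA ltr_pdivrMr //; nra.
  lra.
have cl0 : cl 0 = 0 by rewrite /cl ltxx; case: ltP => //; lra.
have clBB : cl B = B by rewrite /cl; case: ltP => ?; [lra | rewrite ltxx].
have hI : Num.min (g (cl 0)) (g (cl B)) <= v <= Num.max (g (cl 0)) (g (cl B)).
  rewrite cl0 clBB g0 /= (min_idPl (gge0 _ B0)) (max_idPr (gge0 _ B0)).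
  by rewrite (ltW v0) gB.
have [c] := @IVT R (fun u => g (cl u)) 0 B v B0 (continuous_subspaceT hcont) hI.
rewrite in_itv /= => /andP[c0 cB] gc.
exists c; split => //.
by move: gc; rewrite /cl; case: ltP => ?; [lra|]; case: ltP => ?; [lra|].
Unshelve. all: by end_near.
Qed.


Theorem mainTheorem3 (R : realType) (eta : R -> R)
  (mu : probability (measurableTypeR R) R) :
  measurable_fun setT eta ->
  (forall z : R, eta z != 0) ->
  (forall a b : R, lebesgue_measure.-integrable `[a, b]
                     (fun z => ((eta z ^+ 2)^-1)%:E)) ->
  mu.-integrable setT (fun x => x%:E) ->
  (\int[mu]_x x%:E = 0)%E ->
  (exists A : set R, measurable A /\ mu A <> \d_(0 : R) A) ->
  (exists y0 : R, forall a : R, 0 < a -> (G eta mu y0 a < +oo)%E) ->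
  forall y : R,
    (forall a : R, 0 <= a -> exists b : R, 0 <= b /\ G eta mu y a = b%:E) /\
    (forall b : R, 0 <= b -> exists! a : R, 0 <= a /\ G eta mu y a = b%:E).
Proof.
move=> _ eta0 hint mui _ hA [y0 Hy0] y.
have [hf hp] := @phi_facts R eta eta0 hint.
set p := prim (fun z => 2 / eta z ^+ 2) in hp.
have GE y' a : G eta mu y' a = (\int[mu]_x (Qf p y' (y' + a * x))%:E)%E.
  by rewrite /G; apply: eq_integral => x _; rewrite (@q_eq R eta eta0 hint).
have fin := @Gfin R p hp mu mui y0 (fun a a0 => ltac:(rewrite -GE; exact: Hy0 a a0)).
set Gr := fun a => fine (\int[mu]_x (Qf p y (y + a * x))%:E)%E.
have Gr_ge0 a : 0 <= Gr a.
  by rewrite /Gr fine_ge0 // integral_ge0 // => x _; rewrite lee_fin (Qf_ge0 hp).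
have GrE' a : 0 <= a -> (\int[mu]_x (Qf p y (y + a * x))%:E)%E = (Gr a)%:E.
  move=> a0; rewrite /Gr fineK // ge0_fin_numE ?fin //.
  by apply: integral_ge0 => x _; rewrite lee_fin (Qf_ge0 hp).
have GrE a : 0 <= a -> G eta mu y a = (Gr a)%:E by move=> a0; rewrite GE GrE'.
have Gr0 : Gr 0 = 0.
  by rewrite /Gr; under eq_integral do rewrite mul0r addr0 Qf0; rewrite integral0.
have Grpos a : 0 < a -> 0 < Gr a.
  by move=> a0; rewrite -lte_fin -GrE' ?ltW //; apply: Gpos.
have Grconv a b t : 0 <= a -> 0 <= b -> 0 <= t <= 1 ->
    Gr (t * a + (1 - t) * b) <= t * Gr a + (1 - t) * Gr b.
  move=> a0 b0 t01; have /andP[t0 t1] := t01.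
  have ab0 : 0 <= t * a + (1 - t) * b by rewrite addr_ge0 // mulr_ge0 // subr_ge0.
  rewrite -lee_fin EFinD !EFinM -!GrE' //.
  exact: Gconvex.
have [mono surj] := @convex_facts R Gr Gr0 Grpos Grconv.
split.
  by move=> a a0; exists (Gr a); split; [exact: Gr_ge0 | exact: GrE].
move=> b b0; have [a [a0 ga]] := surj b b0.
exists a; split; first by split => //; rewrite GrE // ga.
move=> a' [a'0 Ga']; rewrite GrE // in Ga'; have ga' : Gr a' = b by case: Ga'.
have [aa'|a'a|//] := ltgtP a a'.
  by have := mono _ _ a0 aa'; rewrite ga ga' ltxx.
by have := mono _ _ a'0 a'a; rewrite ga ga' ltxx.
Qed.
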